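(* Let $m,n,k$ be positive integers, $A\in\mathbb{R}^{m\times n}$, $x^*\in\mathbb{R}^n$ with support $S^*=\{i: x^*_i\neq 0\}$ satisfying $1\le |S^*|\le k$, $e\in\mathbb{R}^m$ and $y=Ax^*+e$. Assume $A$ satisfies the $(2k+1)$-RIP, that $\|A_i\|_2=1$ for every column $A_i$ of $A$, and that $$\gamma_k^{RIP}\|e\|_2<\frac{\min_{i\in S^*}|x^*_i|}{2k}-\alpha_k^{RIP}\|x^*\|_2 .$$ Then for every initialization $\mathcal{X}^0\in\mathbb{R}^n$ and every step size $\eta>0$, the sets $S^t$ generated by SEA satisfy: there exists an integer $t_s\le T_{RIP}$ with $S^*\subseteq S^{t_s}$, where $$T_{RIP}=\frac{2k\frac{\|\mathcal{X}^0\|_\infty}{\eta}+(k+1)\min_{i\in S^*}|x^*_i|}{\min_{i\in S^*}|x^*_i|-2k\left(\alpha_k^{RIP}\|x^*\|_2+\gamma_k^{RIP}\|e\|_2\right)}.$$ If moreover $\min_{i\in S^*}|x^*_i|>\frac{2}{\sqrt{1-\delta_{2k}}}\|e\|_2$ and SEA is run for $N>T_{RIP}$ iterations, then $S^*\subseteq S^{t_{BEST}}$ and $\|x^{t_{BEST}}-x^*\|_2\le\frac{2}{\sqrt{1-\delta_k}}\|e\|_2$.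
   Context: For $l\in\{1,\dots,n\}$, the restricted isometry constant $\delta_l$ of $A$ is the smallest $\delta\ge0$ such that $(1-\delta)\|x\|_2^2\le\|Ax\|_2^2\le(1+\delta)\|x\|_2^2$ for all $x\in\mathbb{R}^n$ with at most $l$ nonzero entries; $A$ satisfies the $l$-RIP if $\delta_l<1$. Define $\alpha_k^{RIP}=\delta_{2k+1}\left(1+\frac{\delta_{2k}}{1-\delta_k}\right)$ and $\gamma_k^{RIP}=1+\frac{\delta_{2k+1}\sqrt{1+\delta_k}}{1-\delta_k}$. For $v\in\mathbb{R}^n$, $\mathrm{largest}_k(v)$ is the set of indices of the $k$ entries of $v$ with largest absolute value (ties broken by selecting the highest indices). For $S\subseteq\{1,\dots,n\}$, $A_S$ is the submatrix of $A$ formed by the columns indexed by $S$, $v_S$ the restriction of a vector $v$ to $S$, and $A_S^\dagger$ the Moore–Penrose pseudoinverse of $A_S$. The Support Exploration Algorithm (SEA) with initialization $\mathcal{X}^0$ and step size $\eta>0$ generates, for $t=0,1,2,\dots$: $S^t=\mathrm{largest}_k(\mathcal{X}^t)$; $x^t\in\mathbb{R}^n$ with $x^t_i=0$ for $i\notin S^t$ and $x^t_{S^t}=A_{S^t}^\dagger y$; $\mathcal{X}^{t+1}=\mathcal{X}^t-\eta A^T(Ax^t-y)$. When SEA is run for $N$ iterations (computing $x^0,\dots,x^{N-1}$), it outputs $x^{t_{BEST}}$ where $t_{BEST}\in\arg\min_{t'\in\{0,\dots,N-1\}}\|Ax^{t'}-y\|_2$. *)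

(* Defs.v *)
From HB Require Import structures.
From mathcomp Require Import all_boot all_order all_algebra.
From mathcomp Require Import all_classical all_reals.
Set Implicit Arguments. Unset Strict Implicit. Unset Printing Implicit Defensive.
Import Order.TTheory GRing.Theory Num.Theory.
Local Open Scope ring_scope.
Local Open Scope classical_set_scope.

Section SEA.
Variable R : realType.

Definition norm2 {n : nat} (v : 'cV[R]_n) : R := Num.sqrt (\sum_i (v i 0) ^+ 2).

Definition norminf {n : nat} (v : 'cV[R]_n) : R := \big[Num.max/0]_i `|v i 0|.

Definition supp {n : nat} (v : 'cV[R]_n) : {set 'I_n} := [set i | v i 0 != 0].

Definition sparse {n : nat} (l : nat) (v : 'cV[R]_n) : Prop := (#|supp v| <= l)%N.

(* restricted isometry constant delta_l: the smallest delta >= 0 such that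
   (1-delta)|x|^2 <= |Ax|^2 <= (1+delta)|x|^2 for all l-sparse x
   (the admissible set is closed and bounded below, so its infimum is its min) *)
Definition rip_const {m n : nat} (A : 'M[R]_(m, n)) (l : nat) : R :=
  inf [set d : R | 0 <= d /\ forall x : 'cV[R]_n, sparse l x ->
        (1 - d) * norm2 x ^+ 2 <= norm2 (A *m x) ^+ 2 <= (1 + d) * norm2 x ^+ 2].

Definition alphaRIP {m n : nat} (A : 'M[R]_(m, n)) (k : nat) : R :=
  rip_const A (2 * k).+1 * (1 + rip_const A (2 * k) / (1 - rip_const A k)).

Definition gammaRIP {m n : nat} (A : 'M[R]_(m, n)) (k : nat) : R :=
  1 + rip_const A (2 * k).+1 * Num.sqrt (1 + rip_const A k) / (1 - rip_const A k).

Definition min_abs_supp {n : nat} (v : 'cV[R]_n) : R :=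
  inf [set `|v i 0| | i in [set i | i \in supp v]].

(* ordering used by largest_k: j ranks strictly above i when |v_j| > |v_i|,
   or |v_j| = |v_i| and j > i (ties broken by selecting the highest indices) *)
Definition ranks_above {n : nat} (v : 'cV[R]_n) (j i : 'I_n) : bool :=
  (`|v i 0| < `|v j 0|) || ((`|v j 0| == `|v i 0|) && (i < j)%N).

Definition largest {n : nat} (k : nat) (v : 'cV[R]_n) : {set 'I_n} :=
  [set i | (#|[set j | ranks_above v j i]| < k)%N].

Definition penrose {p q : nat} (M : 'M[R]_(p, q)) (B : 'M[R]_(q, p)) : Prop :=
  [/\ M *m B *m M = M, B *m M *m B = B,
      (M *m B)^T = M *m B & (B *m M)^T = B *m M].

Definition mp_pinv {p q : nat} (M : 'M[R]_(p, q)) : 'M[R]_(q, p) :=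
  xget 0 [set B | penrose M B].

(* A_S : the columns of A indexed by S (in increasing order) *)
Definition colS {m n : nat} (A : 'M[R]_(m, n)) (S : {set 'I_n}) : 'M[R]_(m, #|S|) :=
  \matrix_(i, j) A i (enum_val j).

(* x with x_S = A_S^dagger y and x_i = 0 off S *)
Definition sea_est {m n : nat} (A : 'M[R]_(m, n)) (y : 'cV[R]_m) (S : {set 'I_n})
  : 'cV[R]_n :=
  let z := mp_pinv (colS A S) *m y in
  \col_i (\sum_(j < #|S|) if enum_val j == i then z j 0 else 0).

Fixpoint sea_X {m n : nat} (A : 'M[R]_(m, n)) (y : 'cV[R]_m) (k : nat) (eta : R)
   (X0 : 'cV[R]_n) (t : nat) : 'cV[R]_n :=
  match t with
  | 0 => X0
  | t'.+1 =>
    let Xt := sea_X A y k eta X0 t' in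
    Xt - eta *: (A^T *m (A *m sea_est A y (largest k Xt) - y))
  end.

Definition sea_S {m n : nat} (A : 'M[R]_(m, n)) (y : 'cV[R]_m) (k : nat) (eta : R)
   (X0 : 'cV[R]_n) (t : nat) : {set 'I_n} :=
  largest k (sea_X A y k eta X0 t).

Definition sea_x {m n : nat} (A : 'M[R]_(m, n)) (y : 'cV[R]_m) (k : nat) (eta : R)
   (X0 : 'cV[R]_n) (t : nat) : 'cV[R]_n :=
  sea_est A y (sea_S A y k eta X0 t).

Definition is_tbest {m n : nat} (A : 'M[R]_(m, n)) (y : 'cV[R]_m) (k : nat) (eta : R)
   (X0 : 'cV[R]_n) (N tb : nat) : Prop :=
  (tb < N)%N /\ forall t', (t' < N)%N ->
    norm2 (A *m sea_x A y k eta X0 tb - y) <= norm2 (A *m sea_x A y k eta X0 t' - y).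

End SEA.

(* Main.v *)
Require Import Defs.
From HB Require Import structures.
From mathcomp Require Import all_boot all_order all_algebra.
From mathcomp Require Import all_classical all_reals.
From mathcomp Require Import ring lra zify.
Import Order.TTheory GRing.Theory Num.Theory.
Set Implicit Arguments. Unset Strict Implicit. Unset Printing Implicit Defensive.
Local Open Scope ring_scope.
Local Open Scope classical_set_scope.

Section Aux.
Variable R : realType.

Lemma msq_ge0 (x : R) : 0 <= x * x.
Proof. by rewrite -expr2 sqr_ge0. Qed.

Definition dot {p : nat} (u v : 'cV[R]_p) : R := \sum_i u i 0 * v i 0.

Lemma dotC {p} (u v : 'cV[R]_p) : dot u v = dot v u.
Proof. by apply: eq_bigr => i _; rewrite mulrC. Qed.
Lemma dotDl {p} (u v w : 'cV[R]_p) : dot (u + v) w = dot u w + dot v w.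
Proof. rewrite /dot -big_split /=; apply: eq_bigr => i _; by rewrite !mxE mulrDl. Qed.
Lemma dotZl {p} a (u v : 'cV[R]_p) : dot (a *: u) v = a * dot u v.
Proof. rewrite /dot mulr_sumr; apply: eq_bigr => i _; by rewrite !mxE mulrA. Qed.
Lemma dotNl {p} (u v : 'cV[R]_p) : dot (- u) v = - dot u v.
Proof. rewrite /dot -sumrN; apply: eq_bigr => i _; by rewrite !mxE mulNr. Qed.
Lemma dotBl {p} (u v w : 'cV[R]_p) : dot (u - v) w = dot u w - dot v w.
Proof. by rewrite dotDl dotNl. Qed.
Lemma dotDr {p} (u v w : 'cV[R]_p) : dot w (u + v) = dot w u + dot w v.
Proof. by rewrite dotC dotDl !(dotC w). Qed.
Lemma dotZr {p} a (u v : 'cV[R]_p) : dot v (a *: u) = a * dot v u.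
Proof. by rewrite dotC dotZl dotC. Qed.
Lemma dotNr {p} (u v : 'cV[R]_p) : dot v (- u) = - dot v u.
Proof. by rewrite dotC dotNl dotC. Qed.
Lemma dotBr {p} (u v w : 'cV[R]_p) : dot w (u - v) = dot w u - dot w v.
Proof. by rewrite dotDr dotNr. Qed.
Lemma dot_ge0 {p} (u : 'cV[R]_p) : 0 <= dot u u.
Proof. apply: sumr_ge0 => i _; exact: msq_ge0. Qed.

Lemma dot_eq0 {p} (u : 'cV[R]_p) : dot u u = 0 -> u = 0.
Proof.
move=> H; apply/matrixP => i j; rewrite ord1 mxE.
have := @psumr_eq0P _ _ predT (fun i => u i 0 * u i 0) (fun i _ => msq_ge0 _) H i isT.
by move/eqP; rewrite mulf_eq0 orbb => /eqP.
Qed.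

Lemma norm2E {p} (u : 'cV[R]_p) : norm2 u = Num.sqrt (dot u u).
Proof. by rewrite /norm2 /dot; congr Num.sqrt; apply: eq_bigr => i _; rewrite expr2. Qed.

Lemma norm2_ge0 {p} (u : 'cV[R]_p) : 0 <= norm2 u.
Proof. exact: sqrtr_ge0. Qed.

Lemma norm2_sq {p} (u : 'cV[R]_p) : norm2 u ^+ 2 = dot u u.
Proof. by rewrite norm2E sqr_sqrtr // dot_ge0. Qed.

Lemma dot_adj q p (B : 'M[R]_(q, p)) (u : 'cV[R]_p) (v : 'cV[R]_q) :
  dot (B *m u) v = dot u (B^T *m v).
Proof.
rewrite /dot.
transitivity (\sum_a \sum_j B a j * u j 0 * v a 0).
  by apply: eq_bigr => a _; rewrite !mxE big_distrl.
rewrite exchange_big /=; apply: eq_bigr => j _; rewrite !mxE big_distrr /=.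
by apply: eq_bigr => a _; rewrite !mxE; ring.
Qed.

Lemma amgm (X a b : R) : 0 <= a -> 0 <= b ->
  (forall l, 0 < l -> 2 * X <= l * a ^+ 2 + b ^+ 2 / l) -> X <= a * b.
Proof.
move=> a0 b0 H.
have [Xle|Xgt] := lerP X 0; first by apply: le_trans Xle _; exact: mulr_ge0.
have [a00|apos] := eqVneq a 0.
  subst a; exfalso.
  have l0 : 0 < b ^+ 2 / X + 1 by apply: ltr_pwDr => //; apply: divr_ge0 => //; [exact: sqr_ge0 | exact: ltW].
  have := H _ l0; rewrite expr0n /= mulr0 add0r.
  set l := b ^+ 2 / X + 1 => H2.
  have : b ^+ 2 / l < X.
    rewrite ltr_pdivrMr //  /l mulrDr mulr1 mulrCA divff ?mulr1; last by rewrite gt_eqF.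
    by rewrite ltrDl.
  lra.
have [b00|bpos] := eqVneq b 0.
  subst b; exfalso.
  have ap : 0 < a by rewrite lt_def apos a0.
  have l0 : 0 < X / (a ^+ 2 + 1) by apply: divr_gt0 => //; apply: ltr_pwDr => //; exact: sqr_ge0.
  have := H _ l0; rewrite expr0n /= mul0r addr0.
  have : X / (a ^+ 2 + 1) * a ^+ 2 < X.
    rewrite mulrAC ltr_pdivrMr; last by apply: ltr_pwDr => //; exact: sqr_ge0.
    rewrite mulrDr mulr1 ltrDl //.
  lra.
have ap : 0 < a by rewrite lt_def apos a0.
have bp : 0 < b by rewrite lt_def bpos b0.
have := H (b / a) (divr_gt0 bp ap).
have -> : b / a * a ^+ 2 + b ^+ 2 / (b / a) = 2 * (a * b).
  by field; rewrite ?apos ?bpos.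
lra.
Qed.

Lemma CS {p} (u v : 'cV[R]_p) : dot u v <= norm2 u * norm2 v.
Proof.
apply: amgm; [exact: norm2_ge0|exact: norm2_ge0|] => l l0.
rewrite !norm2_sq.
have H := dot_ge0 (l *: u - v).
rewrite !(dotBl, dotBr, dotZl, dotZr) (dotC v u) in H.
have E : l * dot u u + dot v v / l - 2 * dot u v =
  (l * (l * dot u u) - l * dot u v - (l * dot u v - dot v v)) / l.
  by field; rewrite gt_eqF.
have : 0 <= l * dot u u + dot v v / l - 2 * dot u v.
  by rewrite E; apply: divr_ge0 => //; exact: ltW.
lra.
Qed.

Lemma CSabs {p} (u v : 'cV[R]_p) : `|dot u v| <= norm2 u * norm2 v.
Proof.
rewrite ler_norml CS andbT.
have := CS (- u) v; rewrite dotNl.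
have -> : norm2 (- u) = norm2 u.
  by rewrite !norm2E dotNl dotNr opprK.
lra.
Qed.

Lemma CS2 {p} (u v : 'cV[R]_p) : dot u v ^+ 2 <= dot u u * dot v v.
Proof.
rewrite -!norm2_sq -exprMn -real_normK ?num_real //.
apply: lerXn2r; rewrite ?nnegrE ?normr_ge0 ?mulr_ge0 ?norm2_ge0 //.
exact: CSabs.
Qed.

End Aux.

Lemma dot0l (R : realType) p (v : 'cV[R]_p) : dot 0 v = 0.
Proof. by rewrite /dot big1 // => i _; rewrite mxE mul0r. Qed.
Lemma dot0r (R : realType) p (v : 'cV[R]_p) : dot v 0 = 0.
Proof. by rewrite dotC dot0l. Qed.


Section RIP.
Variable R : realType.
Variables (m n : nat) (A : 'M[R]_(m, n)).

Definition ripset l := [set d : R | 0 <= d /\ forall x : 'cV[R]_n, sparse l x ->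
        (1 - d) * norm2 x ^+ 2 <= norm2 (A *m x) ^+ 2 <= (1 + d) * norm2 x ^+ 2].

Lemma rip_constE l : rip_const A l = inf (ripset l). Proof. by []. Qed.

Definition Kbound : R := \sum_a \sum_j A a j ^+ 2.

Lemma Kbound_ge0 : 0 <= Kbound.
Proof. by apply: sumr_ge0 => a _; apply: sumr_ge0 => j _; exact: sqr_ge0. Qed.

Lemma Ax_bound (x : 'cV[R]_n) : dot (A *m x) (A *m x) <= Kbound * dot x x.
Proof.
have -> : dot (A *m x) (A *m x) = \sum_a (A *m x) a 0 ^+ 2.
  by apply: eq_bigr => a _; rewrite expr2.
rewrite /Kbound mulr_suml.
apply: ler_sum => a _.
pose u : 'cV[R]_n := (row a A)^T.
have E1 : (A *m x) a 0 = dot u x by rewrite /dot !mxE; apply: eq_bigr => j _; rewrite !mxE.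
have E2 : \sum_j A a j ^+ 2 = dot u u by rewrite /dot; apply: eq_bigr => j _; rewrite !mxE expr2.
rewrite E1 E2; exact: CS2.
Qed.

Lemma ripset_ne l : ripset l !=set0.
Proof.
exists (Kbound + 1); split.
  by apply: addr_ge0 => //; exact: Kbound_ge0.
move=> x _; rewrite !norm2_sq.
have h1 := Ax_bound x. have h2 := dot_ge0 x. have h3 := dot_ge0 (A *m x).
have h4 : 0 <= Kbound * dot x x by apply: mulr_ge0 => //; exact: Kbound_ge0.
apply/andP; split; nra.
Qed.

Lemma ripset_lb l : has_lbound (ripset l).
Proof. by exists 0 => d []. Qed.

Lemma rip_ge0 l : 0 <= rip_const A l.
Proof. by apply: lb_le_inf (ripset_ne l) _ => d []. Qed.

Lemma rip_bounds l (x : 'cV[R]_n) : sparse l x ->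
  (1 - rip_const A l) * dot x x <= dot (A *m x) (A *m x) <= (1 + rip_const A l) * dot x x.
Proof.
move=> sx. set d := rip_const A l. set q := dot x x. set p := dot (A *m x) (A *m x).
have q0 : 0 <= q := dot_ge0 x. have p0 : 0 <= p := dot_ge0 (A *m x).
have [q00|qpos] := eqVneq q 0.
  have x0 : x = 0 := dot_eq0 q00.
  by rewrite q00 !mulr0 /p x0 mulmx0 dot0l lexx.
have qp : 0 < q by rewrite lt_def qpos q0.
apply/andP; split.
- have : 1 - p / q <= d.
    apply: lb_le_inf (ripset_ne l) _ => e [e0 He].
    have /andP[h1 _] := He x sx. rewrite !norm2_sq -/p -/q in h1.
    have : 1 - e <= p / q by rewrite ler_pdivlMr.
    lra.
  move=> h; have : 1 - d <= p / q by lra.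
  by rewrite ler_pdivlMr.
- have : p / q - 1 <= d.
    apply: lb_le_inf (ripset_ne l) _ => e [e0 He].
    have /andP[_ h1] := He x sx. rewrite !norm2_sq -/p -/q in h1.
    have : p / q <= 1 + e by rewrite ler_pdivrMr.
    lra.
  move=> h; have : p / q <= 1 + d by lra.
  by rewrite ler_pdivrMr.
Qed.

Lemma rip_mono l l' : (l <= l')%N -> rip_const A l <= rip_const A l'.
Proof.
move=> ll.
apply: lb_le_inf (ripset_ne l') _ => e [e0 He].
apply: (ge_inf (ripset_lb l)); split => // x sx; apply: He.
by rewrite /sparse in sx *; exact: leq_trans sx ll.
Qed.

Lemma rip_disj l (u v : 'cV[R]_n) :
  (#|supp u :|: supp v| <= l)%N -> (forall i, u i 0 * v i 0 = 0) ->
  dot (A *m u) (A *m v) <= rip_const A l * norm2 u * norm2 v.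
Proof.
move=> Hl Hd.
set d := rip_const A l. have d0 : 0 <= d := rip_ge0 l.
have uv0 : dot u v = 0 by rewrite /dot big1.
have -> : d * norm2 u * norm2 v = (Num.sqrt d * norm2 u) * (Num.sqrt d * norm2 v).
  by rewrite mulrACA -expr2 sqr_sqrtr // mulrA.
apply: amgm; [by rewrite mulr_ge0 ?sqrtr_ge0 ?norm2_ge0 ..|] => lam l0.
rewrite !exprMn (sqr_sqrtr d0) !norm2_sq.
have s1 : sparse l (lam *: u + v).
  rewrite /sparse; apply: leq_trans _ Hl; apply: subset_leq_card; apply/fintype.subsetP => i.
  rewrite !inE !mxE; apply: contraR; rewrite negb_or !negbK => /andP[/eqP-> /eqP->].
  by rewrite mulr0 addr0.
have s2 : sparse l (lam *: u - v).
  rewrite /sparse; apply: leq_trans _ Hl; apply: subset_leq_card; apply/fintype.subsetP => i.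
  rewrite !inE !mxE; apply: contraR; rewrite negb_or !negbK => /andP[/eqP-> /eqP->].
  by rewrite mulr0 subrr.
have b1 := rip_bounds s1; have b2 := rip_bounds s2.
rewrite mulmxDr -scalemxAr in b1.
rewrite mulmxDr mulmxN -scalemxAr in b2.
rewrite -/d !(dotDl,dotDr,dotNl,dotNr,dotZl,dotZr) !(dotC v u) uv0 !(dotC (A *m v) (A *m u)) in b1 b2.
move/andP: b1 => [_ b1]. move/andP: b2 => [b2 _].
set X := dot (A *m u) (A *m v) in b1 b2 *.
have key : 4 * lam * X <= 2 * d * (lam * (lam * dot u u) + dot v v) by lra.
rewrite -(ler_pM2r l0) [X in _ <= X]mulrDl divfK ?gt_eqF //.
nra.
Qed.

Lemma supp_opp (v : 'cV[R]_n) : supp (- v) = supp v.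
Proof. by apply/setP => i; rewrite !inE mxE oppr_eq0. Qed.

Lemma norm2_opp p (v : 'cV[R]_p) : norm2 (- v) = norm2 v.
Proof. by rewrite !norm2E dotNl dotNr opprK. Qed.

Lemma rip_disj_abs l (u v : 'cV[R]_n) :
  (#|supp u :|: supp v| <= l)%N -> (forall i, u i 0 * v i 0 = 0) ->
  `|dot (A *m u) (A *m v)| <= rip_const A l * norm2 u * norm2 v.
Proof.
move=> Hl Hd; rewrite ler_norml rip_disj // andbT.
have := @rip_disj l u (- v); rewrite supp_opp norm2_opp mulmxN dotNr => H.
have : - dot (A *m u) (A *m v) <= rip_const A l * norm2 u * norm2 v.
  apply: H => // i; by rewrite mxE mulrN Hd oppr0.
lra.
Qed.

End RIP.


Section Largest.
Variable R : realType.
Variables (n : nat) (v : 'cV[R]_n).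

Lemma ra_irr i : ~~ ranks_above v i i.
Proof. by rewrite /ranks_above ltxx ltnn andbF. Qed.

Lemma ra_trans j i l : ranks_above v j i -> ranks_above v l j -> ranks_above v l i.
Proof.
rewrite /ranks_above => /orP[h1|/andP[/eqP e1 h1]] /orP[h2|/andP[/eqP e2 h2]].
- by rewrite (lt_trans h1 h2).
- by rewrite e2 h1.
- by rewrite -e1 h2.
- by rewrite e2 e1 eqxx (ltn_trans h1 h2) orbT.
Qed.

Lemma ra_total i j : i != j -> ranks_above v j i || ranks_above v i j.
Proof.
move=> nij; rewrite /ranks_above.
have [h|h|h] := ltgtP `|v i 0| `|v j 0|; rewrite ?orbT //=.
by move: nij; rewrite -(inj_eq val_inj) neq_ltn.
Qed.

Definition above i := [set j | ranks_above v j i].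

Lemma in_above j i : (j \in above i) = ranks_above v j i.
Proof. by apply/idP/idP => [/set_mem|h] //; exact: mem_set. Qed.

Lemma above_lt i j : ranks_above v j i -> (#|above j| < #|above i|)%N.
Proof.
move=> hji; apply: proper_card; apply/fintype.properP; split.
  by apply/fintype.subsetP => l; rewrite !in_above => hl; exact: ra_trans hji hl.
by exists j; rewrite !in_above // (negbTE (ra_irr j)).
Qed.

Lemma card_largest k : (#|largest k v| <= k)%N.
Proof.
pose f i := #|above i|.
have inj : {in largest k v &, injective f}.
  move=> i j hi hj E; apply/eqP; apply: contraT => nij.
  by case/orP: (ra_total nij) => /above_lt; rewrite -/(f i) -/(f j) E ltnn.
have := @uniq_leq_size _ (map f (enum (largest k v))) (iota 0 k).
rewrite size_map size_iota -cardE; apply.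
  by rewrite map_inj_in_uniq ?enum_uniq // => x y; rewrite !mem_enum; exact: inj.
move=> x /mapP [i]; rewrite mem_enum inE => hi ->.
by rewrite mem_iota add0n.
Qed.

Lemma largest_dom k (S : {set 'I_n}) i : i \notin largest k v -> i \in S ->
  (#|S| <= k)%N -> exists2 j, j \notin S & `|v i 0| <= `|v j 0|.
Proof.
rewrite /largest inE -leqNgt => hk hi hS.
have : ~~ (above i \subset S).
  apply/negP => sub.
  have : above i \subset S :\ i.
    apply/fintype.subsetP => j hj; rewrite in_setD1 (fintype.subsetP sub j hj) andbT.
    apply/eqP => eji; subst j; by rewrite in_above (negbTE (ra_irr i)) in hj.
  move/subset_leq_card => h3.
  have := cardsD1 i S; rewrite hi /= => h4.
  move: hk hS h3 h4; rewrite /above.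
  move: #|[set j | ranks_above v j i]| #|S :\ i| #|S| => a b c.
  lia.
case/fintype.subsetPn => j hj hjS; exists j => //.
rewrite in_above /ranks_above in hj; case/orP: hj => [/ltW //| /andP[/eqP-> _]] //.
Qed.

End Largest.

Section Est.
Variable R : realType.
Variables (m n : nat) (A : 'M[R]_(m, n)) (S : {set 'I_n}).

Definition emb (z : 'cV[R]_#|S|) : 'cV[R]_n :=
  \col_i (\sum_(j < #|S|) if enum_val j == i then z j 0 else 0).

Lemma sea_estE y : sea_est A y S = emb (mp_pinv (colS A S) *m y).
Proof. by []. Qed.

Lemma emb_out z i : i \notin S -> emb z i 0 = 0.
Proof.
move=> hi; rewrite mxE big1 // => j _; case: eqP => // E.
by rewrite -E enum_valP in hi.
Qed.

Lemma emb_val z j : emb z (enum_val j) 0 = z j 0.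
Proof.
rewrite mxE (bigD1 j) //= eqxx big1 ?addr0 // => l hl.
by rewrite (inj_eq enum_val_inj) (negbTE hl).
Qed.

Lemma mul_emb z : A *m emb z = colS A S *m z.
Proof.
apply/matrixP => a b; rewrite ord1 !mxE.
under eq_bigr => i _ do rewrite mxE big_distrr /=.
rewrite exchange_big /=; apply: eq_bigr => j _; rewrite !mxE.
rewrite (bigD1 (enum_val j)) //= eqxx big1 ?addr0 // => i hi.
by rewrite eq_sym (negbTE hi) mulr0.
Qed.

Lemma dot_emb z : dot (emb z) (emb z) = dot z z.
Proof.
rewrite /dot (bigID (mem S)) /= [X in _ + X]big1 ?addr0; last first.
  by move=> i hi; rewrite emb_out ?mul0r.
rewrite big_enum_val /=; apply: eq_bigr => j _; by rewrite emb_val.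
Qed.

Lemma supp_emb z : supp (emb z) \subset S.
Proof.
apply/fintype.subsetP => i; rewrite inE; apply: contraR => hi.
by rewrite emb_out.
Qed.

Lemma colS_inj k : rip_const A k < 1 -> (#|S| <= k)%N ->
  forall z, dot (colS A S *m z) (colS A S *m z) = 0 -> z = 0.
Proof.
move=> hk hS z H; rewrite -mul_emb in H.
have sp : sparse k (emb z).
  by rewrite /sparse; apply: leq_trans hS; apply: subset_leq_card; exact: supp_emb.
have /andP[h _] := rip_bounds A sp.
rewrite H dot_emb in h.
apply: dot_eq0; apply/eqP; rewrite eq_le dot_ge0 andbT.
have h0 : 0 < 1 - rip_const A k by rewrite subr_gt0.
by rewrite -(pmulr_rle0 _ h0).
Qed.

Lemma pinv_exists k : rip_const A k < 1 -> (#|S| <= k)%N ->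
  exists B, penrose (colS A S) B.
Proof.
move=> hk hS.
set M := colS A S. set Q := M^T *m M.
have Qsym : Q^T = Q by rewrite /Q trmx_mul trmxK.
have Qu : Q \in unitmx.
  rewrite -row_free_unit -kermx_eq0; apply/eqP/matrixP => i j.
  have Hk := mulmx_ker Q.
  set u := row i (kermx Q).
  have uQ : u *m Q = 0 by rewrite /u -row_mul Hk row0.
  have Qz : Q *m u^T = 0 by rewrite -Qsym -trmx_mul uQ trmx0.
  have : u^T = 0.
    apply: (colS_inj hk hS).
    by rewrite dot_adj -/M mulmxA -/Q Qz dot0r.
  move/(congr1 trmx); rewrite trmxK trmx0 => u0.
  transitivity (u 0 j).
    by rewrite /u [RHS]mxE.
  by rewrite u0 !mxE.
exists (invmx Q *m M^T); split.
- by rewrite -!mulmxA -/Q mulVmx // mulmx1.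
- by rewrite -(mulmxA (invmx Q)) -/Q mulVmx // mul1mx.
- by rewrite !trmx_mul trmxK trmx_inv Qsym mulmxA.
- by rewrite -mulmxA -/Q mulVmx // trmx1.
Qed.

Lemma AT_enum (w : 'cV[R]_m) j : (A^T *m w) (enum_val j) 0 = ((colS A S)^T *m w) j 0.
Proof. by rewrite !mxE; apply: eq_bigr => a _; rewrite !mxE. Qed.

Lemma est_normal k y : rip_const A k < 1 -> (#|S| <= k)%N ->
  forall j, j \in S -> (A^T *m (A *m sea_est A y S - y)) j 0 = 0.
Proof.
move=> hk hS j hj.
have [B pB] := pinv_exists hk hS.
set M := colS A S.
have : [set B | penrose M B] (mp_pinv M) := xgetPex 0 (ex_intro _ B pB).
case => p1 _ p3 _.
have NE : M^T *m (M *m mp_pinv M) = M^T.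
  by rewrite -p3 -trmx_mul p1.
rewrite sea_estE mul_emb -/M -(enum_rankK_in hj hj) AT_enum.
by rewrite mulmxBr !mulmxA -(mulmxA M^T) NE subrr mxE.
Qed.

Lemma est_out y i : i \notin S -> sea_est A y S i 0 = 0.
Proof. by move=> hi; rewrite sea_estE emb_out. Qed.

End Est.



Lemma card_U_le (T : finType) (B C : {set T}) : (#|B :|: C| <= #|B| + #|C|)%N.
Proof. by rewrite -cardsUI leq_addr. Qed.

Lemma dot_sqD (R : realType) p (a b : 'cV[R]_p) :
  dot (a + b) (a + b) = dot a a + 2 * dot a b + dot b b.
Proof. rewrite dotDl !dotDr (dotC b a); ring. Qed.

Section Step.
Variable R : realType.
Variables (m n k : nat) (A : 'M[R]_(m, n)) (xs : 'cV[R]_n) (e y : 'cV[R]_m).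
Hypothesis hy : y = A *m xs + e.
Hypothesis hxs : (#|supp xs| <= k)%N.
Hypothesis hrip : rip_const A (2 * k).+1 < 1.
Hypothesis hcol : forall i : 'I_n, norm2 (col i A) = 1.

Let d1 := rip_const A k.
Let d2 := rip_const A (2 * k).
Let d3 := rip_const A (2 * k).+1.

Lemma d12 : d1 <= d2.
Proof. by apply: rip_mono; rewrite mul2n -addnn leq_addr. Qed.
Lemma d23 : d2 <= d3.
Proof. by apply: rip_mono. Qed.
Lemma d1lt : d1 < 1.
Proof. by apply: le_lt_trans hrip; apply: le_trans d12 d23. Qed.
Lemma d2lt : d2 < 1.
Proof. by apply: le_lt_trans hrip; apply: d23. Qed.

Definition cstR := alphaRIP A k * norm2 xs + gammaRIP A k * norm2 e.

Lemma AT_dot (v : 'cV[R]_m) i : (A^T *m v) i 0 = dot (col i A) v.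
Proof. by rewrite /dot !mxE; apply: eq_bigr => a _; rewrite !mxE. Qed.

Lemma norm2_sqrt_le p (u v : 'cV[R]_p) : dot u u <= dot v v -> norm2 u <= norm2 v.
Proof. by move=> h; rewrite !norm2E ler_sqrt // dot_ge0. Qed.

Lemma step_bound_gen (S : {set 'I_n}) (x : 'cV[R]_n) : (#|S| <= k)%N ->
  (forall j, j \notin S -> x j 0 = 0) ->
  (forall j, j \in S -> (A^T *m (A *m x - y)) j 0 = 0) ->
  forall i, i \notin S ->
  `|(A^T *m (A *m x - y)) i 0 + xs i 0| <= cstR.
Proof.
move=> hS hxo hne i hi.
pose z : 'cV[R]_n := \col_j (if j \in S then 0 else xs j 0).
pose w : 'cV[R]_n := \col_j (if j \in S then x j 0 - xs j 0 else 0).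
pose r : 'cV[R]_n := xs - x.
have rzw : r = z - w.
  apply/matrixP => j b; rewrite ord1 !mxE.
  by case: ifP => hj; [rewrite sub0r opprB | rewrite hxo ?hj // subr0 subr0].
have hres : A *m x - y = A *m w - A *m z - e.
  rewrite hy -mulmxBr.
  have -> : w - z = x - xs by rewrite -opprB -rzw /r opprB.
  by rewrite mulmxBr opprD addrA.
have suppw : supp w \subset S.
  apply/fintype.subsetP => j; rewrite inE mxE; by case: ifP => // _; rewrite eqxx.
have suppz : supp z \subset supp xs.
  apply/fintype.subsetP => j; rewrite !inE mxE; by case: ifP => //; rewrite eqxx.
have wz0 : forall j, w j 0 * z j 0 = 0.
  by move=> j; rewrite !mxE; case: ifP => _; rewrite ?mulr0 ?mul0r.
have cardwz : (#|supp w :|: supp z| <= 2 * k)%N.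
  apply: leq_trans (card_U_le _ _) _.
  rewrite mul2n -addnn leq_add //; [apply: leq_trans hS | apply: leq_trans hxs];
    exact: subset_leq_card.
have spw : sparse k w by rewrite /sparse; apply: leq_trans hS; exact: subset_leq_card.
have NE : dot (A *m w) (A *m x - y) = 0.
  rewrite dot_adj /dot big1 // => j _.
  case: (boolP (j \in S)) => hj; first by rewrite hne // mulr0.
  by rewrite mxE (negbTE hj) mul0r.
rewrite hres !dotBr in NE.
set W := norm2 w. set Z := norm2 z. set E := norm2 e. set X := norm2 xs.
have W0 : 0 <= W := norm2_ge0 w. have Z0 : 0 <= Z := norm2_ge0 z.
have E0 : 0 <= E := norm2_ge0 e. have X0 : 0 <= X := norm2_ge0 xs.
have d10 : 0 <= d1 := rip_ge0 A k.
have d30 : 0 <= d3 := rip_ge0 A _.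
have /andP[rl ru] := rip_bounds A spw.
have hwz : dot (A *m w) (A *m z) <= d2 * W * Z := rip_disj A cardwz wz0.
have hwe : dot (A *m w) e <= norm2 (A *m w) * E := CS _ _.
have hAw : norm2 (A *m w) <= Num.sqrt (1 + d1) * W.
  rewrite norm2E /W norm2E -sqrtrM ?ler_sqrt //; last by rewrite addr_ge0.
  by apply: mulr_ge0; [rewrite addr_ge0 | exact: dot_ge0].
set s := Num.sqrt (1 + d1).
have s0 : 0 <= s := sqrtr_ge0 _.
have ww : dot w w = W ^+ 2 by rewrite norm2_sq.
rewrite ww in rl.
have hwe' : dot (A *m w) e <= s * W * E.
  apply: le_trans hwe _; apply: ler_wpM2r => //.
have D0 : 0 < 1 - d1 by rewrite subr_gt0 d1lt.
have key : W * ((1 - d1) * W - (d2 * Z + s * E)) <= 0.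
  rewrite -/d1 in rl.
  have -> : W * ((1 - d1) * W - (d2 * Z + s * E)) = (1 - d1) * W ^+ 2 - d2 * W * Z - s * W * E by ring.
  lra.
have hW : (1 - d1) * W <= d2 * Z + s * E.
  have [W00|Wpos] := eqVneq W 0.
    rewrite W00 mulr0; apply: addr_ge0; apply: mulr_ge0 => //.
    exact: le_trans (rip_ge0 A k) d12.
  have Wp : 0 < W by rewrite lt_def Wpos W0.
  by move: key; rewrite pmulr_rle0 // subr_le0.
have hZ : Z <= X.
  apply: norm2_sqrt_le; apply: ler_sum => j _; rewrite !mxE.
  by case: ifP => _; rewrite ?mul0r ?msq_ge0.
have d20 : 0 <= d2 := le_trans d10 d12.
have hW2 : W <= (d2 * X + s * E) / (1 - d1).
  rewrite ler_pdivlMr // mulrC; apply: le_trans hW _.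
  by rewrite lerD2r ler_wpM2l.
have hr : norm2 r <= Z + W.
  rewrite rzw norm2E dotBl !dotBr (dotC w z).
  have -> : dot z w = 0 by rewrite /dot big1 // => j _; rewrite mulrC wz0.
  rewrite -(ger0_norm (addr_ge0 Z0 W0)) -sqrtr_sqr ler_sqrt ?sqr_ge0 //.
  rewrite -!norm2_sq -/Z -/W.
  have := mulr_ge0 Z0 W0.
  have -> : (Z + W) ^+ 2 = Z ^+ 2 + W ^+ 2 + 2 * (Z * W) by ring.
  lra.
have hrb : d3 * norm2 r <= alphaRIP A k * X + (gammaRIP A k - 1) * E.
  have -> : alphaRIP A k * X + (gammaRIP A k - 1) * E = d3 * (X + (d2 * X + s * E) / (1 - d1)).
    rewrite /alphaRIP /gammaRIP -/d1 -/d2 -/d3 -/s; field.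
    by rewrite gt_eqF.
  apply: ler_wpM2l => //; apply: le_trans hr _; exact: lerD.
pose dl : 'cV[R]_n := \col_j (if j == i then 1 else 0).
pose r' : 'cV[R]_n := \col_j (if j == i then 0 else r j 0).
have colE : col i A = A *m dl.
  apply/matrixP => a b; rewrite ord1 !mxE (bigD1 i) //= big1 ?addr0.
    by rewrite mxE eqxx mulr1.
  by move=> j hj; rewrite mxE (negbTE hj) mulr0.
have rsplit : r = r' + xs i 0 *: dl.
  apply/matrixP => j b; rewrite ord1 !mxE.
  case: eqP => [->|_]; last by rewrite mulr0 addr0.
  by rewrite /r ?mxE hxo // subr0 mulr1 add0r.
have dd : dot (A *m dl) (A *m dl) = 1 by rewrite -colE -norm2_sq hcol expr1n.
have hdl : norm2 dl = 1.
  rewrite norm2E /dot (bigD1 i) //= big1 ?addr0; first by rewrite !mxE eqxx mulr1 sqrtr1.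
  by move=> j hj; rewrite !mxE (negbTE hj) mul0r.
have hr' : norm2 r' <= norm2 r.
  apply: norm2_sqrt_le; apply: ler_sum => j _; rewrite !mxE.
  by case: ifP => _; rewrite ?mul0r ?msq_ge0.
have cardr : (#|supp dl :|: supp r'| <= (2 * k).+1)%N.
  have sub : supp dl :|: supp r' \subset i |: (S :|: supp xs).
    apply/fintype.subsetP => j; rewrite !inE !mxE.
    case: (eqVneq j i) => [->|nji]; first by rewrite eqxx.
    rewrite ?eqxx /=.
    apply: contraLR; rewrite !negb_or => /andP[h1 /negPn/eqP h2].
    by rewrite hxo // h2 subrr eqxx.
  apply: leq_trans (subset_leq_card sub) _.
  rewrite cardsU1.
  have h1 := card_U_le S (supp xs).
  have hb : ((i \notin S :|: supp xs) <= 1)%N by case: (_ \in _).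
  rewrite -addn1 addnC mul2n -addnn; apply: leq_add => //.
  exact: leq_trans h1 (leq_add hS hxs).
have dr0 : forall j, dl j 0 * r' j 0 = 0.
  by move=> j; rewrite !mxE; case: eqP => _; rewrite ?mulr0 ?mul0r.
have hdr := rip_disj_abs A cardr dr0.
rewrite hdl mulr1 -/d3 in hdr.
have hce : `|dot (col i A) e| <= E by rewrite -(mul1r E) -(hcol i); exact: CSabs.
have gi : (A^T *m (A *m x - y)) i 0 + xs i 0 = - dot (A *m dl) (A *m r') - dot (col i A) e.
  rewrite AT_dot.
  have -> : A *m x - y = - (A *m r) - e.
    by rewrite hy /r mulmxBr opprB opprD addrA.
  rewrite dotBr dotNr colE rsplit mulmxDr -scalemxAr dotDr dotZr dd.
  ring.
rewrite gi.
apply: le_trans (ler_normB _ _) _.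
rewrite normrN /cstR.
have : d3 * norm2 r' <= d3 * norm2 r by apply: ler_wpM2l.
rewrite -/X -/E; lra.
Qed.

Lemma ls_opt_gen (S : {set 'I_n}) (x v : 'cV[R]_n) :
  (forall j, j \notin S -> x j 0 = 0) ->
  (forall j, j \in S -> (A^T *m (A *m x - y)) j 0 = 0) ->
  supp v \subset S ->
  dot (A *m x - y) (A *m x - y) <= dot (A *m v - y) (A *m v - y).
Proof.
move=> hxo hne hv.
have -> : A *m v - y = (A *m x - y) + A *m (v - x).
  by rewrite mulmxBr [RHS]addrC addrA subrK.
have orth : dot (A *m (v - x)) (A *m x - y) = 0.
  rewrite dot_adj /dot big1 // => j _.
  case: (boolP (j \in S)) => hj; first by rewrite hne // mulr0.
  rewrite !mxE hxo //.
  have -> : v j 0 = 0.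
    by apply/eqP; apply: contraR hj => h; apply: (fintype.subsetP hv); rewrite inE.
  by rewrite subrr mul0r.
rewrite [X in _ <= X]dot_sqD (dotC (A *m x - y)) orth.
have := dot_ge0 (A *m (v - x)); lra.
Qed.

Lemma step_bound (S : {set 'I_n}) : (#|S| <= k)%N ->
  forall i, i \notin S ->
  `|(A^T *m (A *m sea_est A y S - y)) i 0 + xs i 0| <= cstR.
Proof.
move=> hS; apply: step_bound_gen => // j hj; first exact: est_out.
exact: (est_normal y d1lt hS).
Qed.

Lemma ls_opt (S : {set 'I_n}) (v : 'cV[R]_n) : (#|S| <= k)%N -> supp v \subset S ->
  dot (A *m sea_est A y S - y) (A *m sea_est A y S - y) <= dot (A *m v - y) (A *m v - y).
Proof.
move=> hS; apply: ls_opt_gen => // j hj; first exact: est_out.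
exact: (est_normal y d1lt hS).
Qed.

End Step.



Lemma entry_subZ (R : realType) p (U V : 'cV[R]_p) (a : R) i :
  (U - a *: V) i 0 = U i 0 - a * V i 0.
Proof. by rewrite !mxE. Qed.

Lemma norminf_ge (R : realType) p (v : 'cV[R]_p) i : `|v i 0| <= norminf v.
Proof.
rewrite /norminf (bigD1 i) //=.
by rewrite le_max lexx.
Qed.

Lemma norminf_ge0 (R : realType) p (v : 'cV[R]_p) : 0 <= norminf v.
Proof.
rewrite /norminf; elim/big_ind: _ => //.
by move=> x y hx hy; rewrite le_max hx.
Qed.

Lemma final_ineq (R : realType) (K L N eta c mu M u0 : R) :
  1 <= K -> 0 < eta -> 0 <= c -> 0 < mu - 2 * K * c -> 0 <= M -> 0 <= L ->
  L <= N * K -> - M <= u0 ->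
  u0 + (N - 1) * (eta * (mu - c)) <= M + (L - 1) * (eta * c) ->
  L * (mu - 2 * K * c) <= 2 * K * (M / eta) + (K + 1) * mu.
Proof.
move=> K1 e0 c0 D0 M0 L0 hLN hu h.
set Me := M / eta.
have hM : M = Me * eta by rewrite /Me divfK // gt_eqF.
have h5 : 0 <= (2 * K - 1) * c by apply: mulr_ge0 => //; lra.
have h6 : 0 <= K * c by apply: mulr_ge0 => //; lra.
have mu0 : 0 <= mu by lra.
have h1 : (N - 1) * (mu - c) <= 2 * Me + (L - 1) * c.
  rewrite -(ler_pM2l e0).
  have -> : eta * ((N - 1) * (mu - c)) = (N - 1) * (eta * (mu - c)) by ring.
  have -> : eta * (2 * Me + (L - 1) * c) = 2 * (Me * eta) + (L - 1) * (eta * c) by ring.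
  rewrite -hM; lra.
have h2 : K * ((N - 1) * (mu - c)) <= K * (2 * Me + (L - 1) * c).
  by apply: ler_wpM2l => //; lra.
have h3 : L * (mu - c) <= N * K * (mu - c) by apply: ler_wpM2r => //; lra.
have h4 : 0 <= L * ((K - 1) * c) by apply: mulr_ge0 => //; apply: mulr_ge0 => //; lra.
lra.
Qed.

Section Iter.
Variable R : realType.
Variables (m n k : nat) (A : 'M[R]_(m, n)) (xs : 'cV[R]_n) (e y : 'cV[R]_m).
Hypothesis hy : y = A *m xs + e.
Hypothesis hxs : (#|supp xs| <= k)%N.
Hypothesis hrip : rip_const A (2 * k).+1 < 1.
Hypothesis hcol : forall i : 'I_n, norm2 (col i A) = 1.
Variables (X0 : 'cV[R]_n) (eta : R).
Hypothesis heta : 0 < eta.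

Let Xt t := sea_X A y k eta X0 t.
Let St t := sea_S A y k eta X0 t.
Let c := cstR k A xs e.
Let M := norminf X0.

Lemma Xt_succ t i :
  Xt t.+1 i 0 = Xt t i 0 - eta * (A^T *m (A *m sea_est A y (St t) - y)) i 0.
Proof. exact: entry_subZ. Qed.

Lemma in_step t i : i \in St t -> Xt t.+1 i 0 = Xt t i 0.
Proof.
move=> hi; rewrite Xt_succ (est_normal y (d1lt hrip) (card_largest _ _)) //.
by rewrite mulr0 subr0.
Qed.

Lemma out_step t i : i \notin St t ->
  `|Xt t.+1 i 0 - Xt t i 0 - eta * xs i 0| <= eta * c.
Proof.
move=> hi; rewrite Xt_succ.
have := step_bound hy hxs hrip hcol (card_largest (Xt t) k) hi.
set g := (A^T *m _) i 0 => hg.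
have -> : Xt t i 0 - eta * g - Xt t i 0 - eta * xs i 0 = - (eta * (g + xs i 0)) by ring.
rewrite normrN normrM gtr0_norm //; apply: ler_wpM2l => //; exact: ltW.
Qed.

Lemma c_ge0 : 0 <= c.
Proof.
have d10 := rip_ge0 A k. have d20 := rip_ge0 A (2 * k). have d30 := rip_ge0 A (2 * k).+1.
have D0 : 0 < 1 - rip_const A k by rewrite subr_gt0 (d1lt hrip).
rewrite /c /cstR /alphaRIP /gammaRIP.
apply: addr_ge0; apply: mulr_ge0; rewrite ?norm2_ge0 //.
  by apply: mulr_ge0 => //; apply: addr_ge0 => //; apply: divr_ge0 => //; exact: ltW.
apply: addr_ge0 => //; apply: divr_ge0; last exact: ltW.
by apply: mulr_ge0 => //; exact: sqrtr_ge0.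
Qed.

Lemma bound_outside j t : j \notin supp xs -> `|Xt t j 0| <= M + t%:R * (eta * c).
Proof.
move=> hj; have xj : xs j 0 = 0 by move: hj; rewrite inE negbK => /eqP.
elim: t => [|t IH]; first by rewrite mul0r addr0; exact: norminf_ge.
have step : `|Xt t.+1 j 0| <= `|Xt t j 0| + eta * c.
  case: (boolP (j \in St t)) => hjs.
    rewrite in_step // lerDl; apply: mulr_ge0; [exact: ltW | exact: c_ge0].
  have := out_step hjs; rewrite xj mulr0 subr0 => h.
  have := ler_normD (Xt t.+1 j 0 - Xt t j 0) (Xt t j 0); rewrite subrK.
  move=> h2; apply: le_trans h2 _; rewrite addrC lerD2l //.
apply: le_trans step _; rewrite -natr1 mulrDl mul1r addrA lerD2r //.
Qed.

Hypothesis hsupp : (1 <= #|supp xs|)%N.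
Let mu := min_abs_supp xs.
Hypothesis hmu : 2 * k%:R * c < mu.

Lemma k_pos : (0 < k)%N.
Proof. exact: leq_trans hsupp hxs. Qed.

Lemma k1 : 1 <= k%:R :> R.
Proof. by rewrite ler1n k_pos. Qed.

Lemma mu_lb : has_lbound [set `|xs i 0| | i in [set i | i \in supp xs]].
Proof. by exists 0 => _ [i _ <-]. Qed.

Lemma mu_le i : i \in supp xs -> mu <= `|xs i 0|.
Proof. by move=> hi; apply: (ge_inf mu_lb); exists i. Qed.

Lemma supp_ne : exists i, i \in supp xs.
Proof. by apply/card_gt0P. Qed.

Lemma mu_ge0 : 0 <= mu.
Proof.
have [i hi] := supp_ne.
apply: lb_le_inf; first by exists `|xs i 0|, i.
by move=> _ [j _ <-].
Qed.

Lemma c_le_mu : c <= mu.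
Proof.
have := c_ge0; have := k1; move: hmu => h h1 h2.
have : 0 <= (2 * k%:R - 1) * c by apply: mulr_ge0 => //; lra.
lra.
Qed.

Definition u i t := if 0 < xs i 0 then Xt t i 0 else - Xt t i 0.

Lemma u_le_abs i t : u i t <= `|Xt t i 0|.
Proof. by rewrite /u; case: ifP => _; [exact: ler_norm | rewrite -normrN; exact: ler_norm]. Qed.

Lemma u0_ge i : - M <= u i 0.
Proof.
have := norminf_ge X0 i; rewrite ler_norml => /andP[h2 h3].
rewrite /u /Xt /M /=; case: ifP => _; lra.
Qed.

Lemma u_out i t : i \in supp xs -> i \notin St t -> u i t + eta * (mu - c) <= u i t.+1.
Proof.
move=> hi hs.
have := out_step hs; rewrite ler_norml => /andP[h1 h2].
have hm := mu_le hi.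
have ea : eta * mu <= eta * `|xs i 0| by apply: ler_wpM2l => //; exact: ltW.
have xn0 : xs i 0 != 0 by move: hi; rewrite inE.
rewrite /u; case: ifP => hx.
  rewrite gtr0_norm // in ea; rewrite mulrBr; lra.
have hx' : xs i 0 < 0 by rewrite lt_neqAle xn0 /= leNgt hx.
have ea2 : eta * mu <= - (eta * xs i 0) by rewrite -mulrN -(ltr0_norm hx').
rewrite mulrBr; lra.
Qed.

Lemma u_mono i t : i \in supp xs -> u i t <= u i t.+1.
Proof.
move=> hi; case: (boolP (i \in St t)) => hs.
  by rewrite /u in_step.
apply: le_trans (u_out hi hs); rewrite lerDl; apply: mulr_ge0; first exact: ltW.
by rewrite subr_ge0 c_le_mu.
Qed.

Lemma dom i t : i \in supp xs -> i \notin St t -> u i t <= M + t%:R * (eta * c).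
Proof.
move=> hi hs.
have [j hj hij] := largest_dom (v := Xt t) hs hi hxs.
apply: le_trans (u_le_abs i t) _; apply: le_trans hij _.
exact: bound_outside.
Qed.

Definition cnt i L := (\sum_(0 <= t < L) (i \notin St t))%N.

Lemma cnt_main i L : i \in supp xs ->
  u i 0 + (cnt i L)%:R * (eta * (mu - c)) <= u i L /\
  ((1 <= cnt i L)%N ->
    u i 0 + ((cnt i L)%:R - 1) * (eta * (mu - c)) <= M + (L%:R - 1) * (eta * c)).
Proof.
move=> hi; elim: L => [|L [IH1 IH2]].
  by rewrite /cnt big_geq // mul0r addr0; split.
rewrite /cnt big_nat_recr //= -/(cnt i L).
have ac : 0 <= eta * (mu - c).
  by apply: mulr_ge0; [exact: ltW | rewrite subr_ge0 c_le_mu].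
have ec : 0 <= eta * c by apply: mulr_ge0; [exact: ltW | exact: c_ge0].
case: (boolP (i \in St L)) => hs /=.
- rewrite addn0; have eq : u i L.+1 = u i L by rewrite /u in_step.
  split; first by rewrite eq.
  move=> h1; have := IH2 h1.
  have e2 : L.+1%:R = L%:R + 1 :> R by rewrite natr1.
  rewrite e2; lra.
- rewrite addn1.
  have e1 : (cnt i L).+1%:R = (cnt i L)%:R + 1 :> R by rewrite natr1.
  have e2 : L.+1%:R = L%:R + 1 :> R by rewrite natr1.
  rewrite e1 e2 addrK addrK mulrDl mul1r.
  have := u_out hi hs; have := dom hi hs.
  by split; [|move=> _]; lra.
Qed.

Lemma count_exists L : (forall t, (t < L)%N -> ~~ (supp xs \subset St t)) ->
  exists2 i, i \in supp xs & (L <= cnt i L * k)%N.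
Proof.
move=> hbad.
have [L0|Lpos] := posnP L.
  by have [i hi] := supp_ne; exists i; rewrite // L0.
have hsum : (L <= \sum_(i in supp xs) cnt i L)%N.
  rewrite /cnt exchange_big /=.
  rewrite -{1}(subn0 L) -[((L - 0)%N)]muln1 -sum_nat_const_nat.
  rewrite big_nat_cond [X in (_ <= X)%N]big_nat_cond.
  apply: leq_sum => t /andP[/andP[_ htL] _].
  have := hbad t htL; case/fintype.subsetPn => i hi hni.
  by rewrite (bigD1 i) //= hni.
apply/exists_inP; apply: contraLR hsum => /exists_inPn hall.
rewrite -ltnNge.
have h1 : (\sum_(i in supp xs) cnt i L * k <= #|supp xs| * L.-1)%N.
  rewrite -sum_nat_const; apply: leq_sum => i hi.
  by have := hall i hi; rewrite -ltnNge => h; rewrite -ltnS prednK.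
rewrite -big_distrl /= in h1.
have h2 : (#|supp xs| * L.-1 <= L.-1 * k)%N by rewrite mulnC leq_mul2l hxs orbT.
have h3 := leq_trans h1 h2.
rewrite leq_pmul2r ?k_pos // in h3.
by apply: leq_ltn_trans h3 _; rewrite prednK.
Qed.

Lemma part1 (T : R) :
  T = ((2 * k)%:R * (M / eta) + (k.+1)%:R * mu) / (mu - (2 * k)%:R * c) ->
  exists ts : nat, ts%:R <= T /\ supp xs \subset St ts.
Proof.
move=> hT.
have K1 := k1.
have e2 : ((2 * k)%:R : R) = 2 * k%:R by rewrite natrM.
have e3 : ((k.+1)%:R : R) = k%:R + 1 by rewrite natr1.
rewrite e2 e3 in hT.
set K := k%:R in hT K1.
have c0 := c_ge0. have mu0 := mu_ge0. have M0 : 0 <= M := norminf_ge0 X0.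
have D0 : 0 < mu - 2 * K * c by rewrite subr_gt0.
have T0 : 0 <= T.
  rewrite hT; apply: divr_ge0; last exact: ltW.
  apply: addr_ge0; apply: mulr_ge0 => //; try lra.
  by apply: divr_ge0 => //; exact: ltW.
pose L := (Num.truncn T).+1.
have TL : T < L%:R := truncnS_gt T.
case: (boolP [exists t : 'I_L, supp xs \subset St t]) => [/existsP [t ht] | /existsPn hall].
  exists t; split => //.
  by rewrite -truncn_ge_nat // -ltnS ltn_ord.
exfalso.
have hbad : forall t, (t < L)%N -> ~~ (supp xs \subset St t).
  by move=> t ht; exact: (hall (Ordinal ht)).
have [i hi hc] := count_exists hbad.
have [h1 h2] := cnt_main L hi.
have cpos : (1 <= cnt i L)%N.
  by rewrite lt0n; apply/eqP => c00; rewrite c00 mul0n in hc.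
have h3 := h2 cpos.
have hLN : L%:R <= (cnt i L)%:R * K :> R by rewrite /K -natrM ler_nat.
have := final_ineq K1 heta c0 D0 M0 (ler0n _ L) hLN (u0_ge i) h3.
rewrite -ler_pdivlMr // -hT => hLT.
by move: (lt_le_trans TL hLT); rewrite ltxx.
Qed.

End Iter.



Lemma sqrt_bound (R : realType) (a b E : R) : 0 <= a -> 0 < b -> 0 <= E ->
  b * a <= 4 * E ^+ 2 -> Num.sqrt a <= 2 / Num.sqrt b * E.
Proof.
move=> a0 b0 E0 h.
have sb : 0 < Num.sqrt b by rewrite sqrtr_gt0.
rewrite -(ler_pM2r sb).
have -> : 2 / Num.sqrt b * E * Num.sqrt b = 2 * E by field; rewrite gt_eqF.
rewrite -sqrtrM // -(ger0_norm (_ : 0 <= 2 * E)); last by apply: mulr_ge0.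
rewrite -sqrtr_sqr ler_sqrt; last exact: sqr_ge0.
have -> : (2 * E) ^+ 2 = 4 * E ^+ 2 by ring.
by rewrite mulrC.
Qed.

Lemma dot_sqD_le (R : realType) p (a b : 'cV[R]_p) :
  dot (a + b) (a + b) <= 2 * dot a a + 2 * dot b b.
Proof.
have := dot_ge0 (a + - b).
rewrite !dot_sqD !dotNl !dotNr opprK.
lra.
Qed.

Lemma norm_le_dot (R : realType) p (a b : 'cV[R]_p) :
  norm2 a <= norm2 b -> dot a a <= dot b b.
Proof.
move=> h; rewrite -!norm2_sq !expr2.
by apply: ler_pM; rewrite ?norm2_ge0.
Qed.

Section Recov.
Variable R : realType.
Variables (m n k : nat) (A : 'M[R]_(m, n)) (xs : 'cV[R]_n) (e y : 'cV[R]_m).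
Hypothesis hy : y = A *m xs + e.
Hypothesis hxs : (#|supp xs| <= k)%N.
Hypothesis hrip : rip_const A (2 * k).+1 < 1.
Hypothesis hsupp : (1 <= #|supp xs|)%N.

Lemma mu_le' i : i \in supp xs -> min_abs_supp xs <= `|xs i 0|.
Proof.
move=> hi; apply: ge_inf; last by exists i.
by exists 0 => _ [j _ <-].
Qed.

Lemma mu_ge0' : 0 <= min_abs_supp xs.
Proof.
have [i hi] : exists i, i \in supp xs by apply/card_gt0P.
apply: lb_le_inf; first by exists `|xs i 0|, i.
by move=> _ [j _ <-].
Qed.

Lemma recov (S : {set 'I_n}) (xt : 'cV[R]_n) : (#|S| <= k)%N ->
  (forall j, j \notin S -> xt j 0 = 0) ->
  dot (A *m xt - y) (A *m xt - y) <= dot e e ->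
  min_abs_supp xs > 2 / Num.sqrt (1 - rip_const A (2 * k)) * norm2 e ->
  supp xs \subset S /\ norm2 (xt - xs) <= 2 / Num.sqrt (1 - rip_const A k) * norm2 e.
Proof.
move=> hS hxo hres hmu2.
set d := xt - xs.
have Ad : A *m d = (A *m xt - y) + e.
  by rewrite hy /d mulmxBr opprD addrA subrK.
have hAd : dot (A *m d) (A *m d) <= 4 * dot e e.
  rewrite Ad; apply: le_trans (dot_sqD_le _ _) _; lra.
have ee : dot e e = norm2 e ^+ 2 by rewrite norm2_sq.
have E0 := norm2_ge0 e.
have d0 := dot_ge0 d.
have hsub : supp xs \subset S.
  apply/fintype.subsetP => i hi; apply: contraT => hni.
  have sd : supp d \subset S :|: supp xs.
    apply/fintype.subsetP => j; rewrite !inE /d !mxE.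
    apply: contraR; rewrite negb_or negbK => /andP[h1 /eqP h2].
    by rewrite hxo // h2 subrr.
  have spd : sparse (2 * k) d.
    rewrite /sparse; apply: leq_trans (subset_leq_card sd) _.
    apply: leq_trans (card_U_le _ _) _; rewrite mul2n -addnn; exact: leq_add.
  have /andP[hl _] := rip_bounds A spd.
  have di : d i 0 = - xs i 0 by rewrite /d !mxE hxo // sub0r.
  have hdi : xs i 0 * xs i 0 <= dot d d.
    rewrite /dot (bigD1 i) //= di mulrNN lerDl; apply: sumr_ge0 => j _; exact: msq_ge0.
  have hm := mu_le' hi. have m0 := mu_ge0'.
  have hm2 : min_abs_supp xs ^+ 2 <= xs i 0 * xs i 0.
    have : min_abs_supp xs ^+ 2 <= `|xs i 0| ^+ 2.
      by apply: lerXn2r; rewrite ?nnegrE ?normr_ge0.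
    by rewrite -normrX ger0_norm ?sqr_ge0 // expr2.
  have b0 : 0 < 1 - rip_const A (2 * k) by rewrite subr_gt0 (d2lt hrip).
  have : (1 - rip_const A (2 * k)) * min_abs_supp xs ^+ 2 <= 4 * norm2 e ^+ 2.
    rewrite -ee; apply: le_trans hAd; apply: le_trans hl.
    by apply: ler_wpM2l; [exact: ltW | exact: le_trans hdi].
  move/(sqrt_bound (sqr_ge0 _) b0 E0).
  rewrite sqrtr_sqr ger0_norm // => h.
  by move: (lt_le_trans hmu2 h); rewrite ltxx.
split => //.
have sd : supp d \subset S.
  apply/fintype.subsetP => j; rewrite !inE /d !mxE.
  apply: contraR => hj; rewrite hxo //.
  have : j \notin supp xs by apply: contra hj; exact: (fintype.subsetP hsub).
  by rewrite inE negbK => /eqP ->; rewrite subrr.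
have spd : sparse k d by rewrite /sparse; apply: leq_trans (subset_leq_card sd) hS.
have /andP[hl _] := rip_bounds A spd.
have b0 : 0 < 1 - rip_const A k by rewrite subr_gt0 (d1lt hrip).
rewrite norm2E; apply: sqrt_bound => //.
rewrite -ee; exact: le_trans hl hAd.
Qed.

End Recov.

Local Close Scope classical_set_scope.

Theorem theorem4p1 (R : realType) (m n k : nat) (A : 'M[R]_(m, n))
  (xs : 'cV[R]_n) (e : 'cV[R]_m) (y : 'cV[R]_m) :
  (0 < m)%N -> (0 < n)%N -> (0 < k)%N ->
  (1 <= #|supp xs| <= k)%N ->
  y = A *m xs + e ->
  ((2 * k).+1 <= n)%N ->
  rip_const A (2 * k).+1 < 1 ->
  (forall i : 'I_n, norm2 (col i A) = 1) ->
  gammaRIP A k * norm2 e < min_abs_supp xs / (2 * k)%:R - alphaRIP A k * norm2 xs ->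
  forall (X0 : 'cV[R]_n) (eta : R), 0 < eta ->
  let T := ((2 * k)%:R * (norminf X0 / eta) + (k.+1)%:R * min_abs_supp xs) /
           (min_abs_supp xs - (2 * k)%:R * (alphaRIP A k * norm2 xs + gammaRIP A k * norm2 e)) in
    (exists ts : nat, ts%:R <= T /\ supp xs \subset sea_S A y k eta X0 ts) /\
    (min_abs_supp xs > 2 / Num.sqrt (1 - rip_const A (2 * k)) * norm2 e ->
     forall N : nat, N%:R > T ->
     forall tb : nat, is_tbest A y k eta X0 N tb ->
       supp xs \subset sea_S A y k eta X0 tb /\
       norm2 (sea_x A y k eta X0 tb - xs) <= 2 / Num.sqrt (1 - rip_const A k) * norm2 e).
Proof.
move=> m0 n0 k0 /andP[hs1 hxs] hy hn hrip hcol hgam X0 eta heta T.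
have hmu : 2 * k%:R * cstR k A xs e < min_abs_supp xs.
  have kp : 0 < 2 * k%:R :> R by rewrite mulr_gt0 // ltr0n.
  have h : alphaRIP A k * norm2 xs + gammaRIP A k * norm2 e < min_abs_supp xs / (2 * k)%:R.
    by move: hgam; set a := alphaRIP A k * norm2 xs; lra.
  rewrite ltr_pdivlMr ?ltr0n ?muln_gt0 // natrM in h.
  by rewrite /cstR mulrC.
have [ts [hts hsub]] := part1 hy hxs hrip hcol heta hs1 hmu (erefl T).
split; first by exists ts.
move=> hmu2 N hN tb [htb hmin].
have htsN : (ts < N)%N by rewrite -(ltr_nat R); exact: le_lt_trans hts hN.
have h1 := hmin ts htsN.
have h2 := ls_opt y hrip (card_largest (sea_X A y k eta X0 ts) k) hsub.
have eA : A *m xs - y = - e by rewrite hy opprD addrA subrr add0r.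
rewrite eA dotNl dotNr opprK in h2.
have h3 := norm_le_dot h1.
apply: (recov hy hxs hrip hs1 (card_largest (sea_X A y k eta X0 tb) k)) => //.
- by move=> j hj; exact: est_out.
- exact: le_trans h3 h2.
Qed.
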